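(* Let $\Gamma^B$ be either $\Gamma_1^B$ or $\Gamma_2^B$ (as in the context), with the operator $-\Delta=-d^2/dx^2$. Then the first eigenvalue $\lambda_1$ of $-\Delta$ on $\Gamma^B$ is simple. Moreover, if $\ell_1=\ell_2=\ell_3=\ell_4$, then the eigenfunction $\phi$ corresponding to $\lambda_1$ is identical on the four edges $e_1,\dots,e_4$, i.e. $\phi_1\equiv\phi_2\equiv\phi_3\equiv\phi_4$ where $\phi_j=\phi|_{e_j}$ (each edge parametrized from $B$ to $A$), and it is non-zero everywhere except at $B$.
   Context: $\Gamma_1$: two vertices $A,B$ joined by four edges $e_1,\dots,e_4$ of lengths $\ell_1,\dots,\ell_4>0$, with $\delta$-type condition (real coupling constant $\gamma_A$) at $A$. $\Gamma_2$: $\Gamma_1$ plus a vertex $C$ and edge $e_0$ of length $\ell_0>0$ joining $C$ to $A$, with Neumann–Kirchhoff conditions at $A$ and $C$. A $\delta$-type condition with coupling $\gamma_v$ at $v$: $f$ continuous at $v$ and $\sum_{e\ni v}f_e'(v)=\gamma_vf(v)$ (derivatives into the edges); Neumann–Kirchhoff means $\gamma_v=0$. $\Gamma_i^B$ is obtained from $\Gamma_i$ by imposing the Dirichlet condition $f_e(B)=0$ on every edge end at $B$ (which decouples the edge ends at $B$). *)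

(* Defs.v *)
From Stdlib Require Import Reals List.
From Coquelicot Require Import Coquelicot.
Import ListNotations.
Open Scope R_scope.

Inductive graph_kind := Gamma1 | Gamma2.

(* Edge indices: j = 1..4 are e_1..e_4, parametrized x in [0, l j] from B (x=0)
   to A (x=l j); j = 0 is e_0 (only in Gamma2), parametrized from A (x=0)
   to C (x=l 0). *)
Definition edges (G : graph_kind) : list nat :=
  match G with Gamma1 => [1;2;3;4]%nat | Gamma2 => [0;1;2;3;4]%nat end.

(* Coupling constant at A: gamma_A (delta condition) for Gamma1,
   0 (Neumann-Kirchhoff) for Gamma2. *)
Definition coupling (G : graph_kind) (gA : R) : R :=
  match G with Gamma1 => gA | Gamma2 => 0 end.

(* On one edge of length L: f is twice differentiable (as a function on R, the
   values on [0,L] are what matters; derivatives at the endpoints are the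
   one-sided ones of the edge function) and -f'' = lam f on [0,L]. *)
Definition edge_eq (lam L : R) (f : R -> R) : Prop :=
  (forall x, ex_derive f x) /\ (forall x, ex_derive (Derive f) x) /\
  (forall x, 0 <= x <= L -> - Derive (Derive f) x = lam * f x).

Definition is_eigenfunction (G : graph_kind) (l : nat -> R) (gA lam : R)
    (phi : nat -> R -> R) : Prop :=
  (forall j, In j (edges G) -> edge_eq lam (l j) (phi j)) /\
  (forall j, In j [1;2;3;4]%nat -> phi j 0 = 0) /\
  (forall j k, In j [1;2;3;4]%nat -> In k [1;2;3;4]%nat -> phi j (l j) = phi k (l k)) /\
  (match G with
   | Gamma1 =>
       (* delta condition at A, derivatives taken into the edges *)
       - Derive (phi 1%nat) (l 1%nat) - Derive (phi 2%nat) (l 2%nat)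
       - Derive (phi 3%nat) (l 3%nat) - Derive (phi 4%nat) (l 4%nat)
         = coupling G gA * phi 1%nat (l 1%nat)
   | Gamma2 =>
       phi 0%nat 0 = phi 1%nat (l 1%nat) /\
       Derive (phi 0%nat) 0
       - Derive (phi 1%nat) (l 1%nat) - Derive (phi 2%nat) (l 2%nat)
       - Derive (phi 3%nat) (l 3%nat) - Derive (phi 4%nat) (l 4%nat)
         = coupling G gA * phi 1%nat (l 1%nat) /\
       (* Kirchhoff at C (degree one vertex): derivative into e_0 vanishes *)
       - Derive (phi 0%nat) (l 0%nat) = 0
   end) /\
  (exists j x, In j (edges G) /\ 0 <= x <= l j /\ phi j x <> 0).

Definition is_eigenvalue (G : graph_kind) (l : nat -> R) (gA lam : R) : Prop :=
  exists phi, is_eigenfunction G l gA lam phi.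

Definition is_first_eigenvalue (G : graph_kind) (l : nat -> R) (gA lam : R) : Prop :=
  is_eigenvalue G l gA lam /\ (forall mu, is_eigenvalue G l gA mu -> lam <= mu).

Definition is_simple_eigenvalue (G : graph_kind) (l : nat -> R) (gA lam : R) : Prop :=
  forall phi psi, is_eigenfunction G l gA lam phi -> is_eigenfunction G l gA lam psi ->
    exists c : R, forall j x, In j (edges G) -> 0 <= x <= l j -> psi j x = c * phi j x.

(* Main.v *)
Require Import Defs.
From Stdlib Require Import Reals List.
From Coquelicot Require Import Coquelicot.
Import ListNotations.
Open Scope R_scope.
From Stdlib Require Import Lra FunctionalExtensionality.

Lemma cont_of_derive (f : R -> R) x l : is_derive f x l -> continuity_pt f x.
Proof.
  intros H. apply continuity_pt_filterlim. apply (ex_derive_continuous (K:=R_AbsRing) (V:=R_NormedModule)). exists l; exact H.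
Qed.

Lemma const_on (h : R -> R) a b :
  a <= b -> (forall t, a <= t <= b -> is_derive h t 0) -> h a = h b.
Proof.
  intros Hab H.
  destruct (MVT_gen h a b (fun _ => 0)) as [c [_ Hc]].
  - intros x Hx. rewrite Rmin_left in Hx by lra. rewrite Rmax_right in Hx by lra.
    apply H; lra.
  - intros x Hx. rewrite Rmin_left in Hx by lra. rewrite Rmax_right in Hx by lra.
    eapply cont_of_derive. apply H; lra.
  - lra.
Qed.

Lemma is_derive_Rminus (f g : R -> R) x df dg :
  is_derive f x df -> is_derive g x dg -> is_derive (fun t => f t - g t) x (df - dg).
Proof. intros H1 H2. exact (is_derive_minus f g x df dg H1 H2). Qed.

Definition sol (lam : R) (g : R -> R) : Prop :=
  (forall x, ex_derive g x) /\ (forall x, ex_derive (Derive g) x) /\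
  (forall x, Derive (Derive g) x = - lam * g x).

Lemma wronskian lam L f g : edge_eq lam L f -> sol lam g ->
  forall x y, 0 <= x <= L -> 0 <= y <= L ->
  f x * Derive g x - Derive f x * g x = f y * Derive g y - Derive f y * g y.
Proof.
  intros [Hf1 [Hf2 Hf3]] [Hg1 [Hg2 Hg3]].
  assert (K : forall a b, 0 <= a -> a <= b -> b <= L ->
    f a * Derive g a - Derive f a * g a = f b * Derive g b - Derive f b * g b).
  { intros a b Ha Hab Hb.
    apply (const_on (fun t => f t * Derive g t - Derive f t * g t)); auto.
    intros t Ht.
    assert (E: 0 = (Derive f t * Derive g t + f t * Derive (Derive g) t) -
       (Derive (Derive f) t * g t + Derive f t * Derive g t)).
    { rewrite Hg3. specialize (Hf3 t ltac:(lra)). nra. }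
    rewrite E. apply is_derive_Rminus.
    - apply Derive.is_derive_mult; apply Derive_correct; auto.
    - apply Derive.is_derive_mult; apply Derive_correct; auto. }
  intros x y Hx Hy. destruct (Rle_lt_dec x y).
  - apply K; lra.
  - symmetry; apply K; lra.
Qed.

Lemma ratio_const (f g : R -> R) a b :
  a <= b -> (forall t, ex_derive f t) -> (forall t, ex_derive g t) ->
  (forall t, a <= t <= b -> 0 < g t) ->
  (forall t, a <= t <= b -> f t * Derive g t - Derive f t * g t = 0) ->
  f a / g a = f b / g b.
Proof.
  intros Hab Hf Hg Hpos HW.
  apply (const_on (fun t => f t / g t)); auto.
  intros t Ht.
  assert (E : 0 = (Derive f t * g t - f t * Derive g t) / (g t ^ 2)).
  { specialize (HW t Ht). specialize (Hpos t Ht).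
    replace (Derive f t * g t - f t * Derive g t) with (- (f t * Derive g t - Derive f t * g t)) by ring.
    rewrite HW. field. lra. }
  rewrite E. apply is_derive_div; try apply Derive_correct; auto.
  specialize (Hpos t Ht). lra.
Qed.

Lemma sol_of (g g' g'' : R -> R) lam :
  (forall x, is_derive g x (g' x)) -> (forall x, is_derive g' x (g'' x)) ->
  (forall x, g'' x = - lam * g x) -> sol lam g.
Proof.
  intros H1 H2 H3.
  assert (E : Derive g = g').
  { apply functional_extensionality; intros x; apply is_derive_unique; auto. }
  split; [|split].
  - intros x; exists (g' x); auto.
  - rewrite E; intros x; exists (g'' x); auto.
  - intros x. rewrite E. rewrite (is_derive_unique _ _ _ (H2 x)). auto.
Qed.

Lemma sol_edge lam L f : sol lam f -> edge_eq lam L f.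
Proof. intros [H1 [H2 H3]]. split; [|split]; auto. intros x _. rewrite H3; ring. Qed.

Lemma sol_sin k : sol (k^2) (fun x => sin (k*x)).
Proof.
  apply (sol_of _ (fun x => k * cos (k*x)) (fun x => - k * k * sin (k*x))).
  - intros x. auto_derive; auto. ring.
  - intros x. auto_derive; auto. ring.
  - intros x. ring.
Qed.

Lemma sol_cos k a : sol (k^2) (fun x => cos (k*(a - x))).
Proof.
  apply (sol_of _ (fun x => k * sin (k*(a-x))) (fun x => - k * k * cos (k*(a-x)))).
  - intros x. auto_derive; auto. unfold Rminus; ring.
  - intros x. auto_derive; auto. unfold Rminus; ring.
  - intros x. ring.
Qed.

Lemma sol_sinh k : sol (- k^2) (fun x => exp (k*x) - exp (-(k*x))).
Proof.
  apply (sol_of _ (fun x => k * (exp (k*x) + exp (-(k*x)))) (fun x => k * k * (exp (k*x) - exp (-(k*x))))).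
  - intros x. auto_derive; auto. ring.
  - intros x. auto_derive; auto. ring.
  - intros x. ring.
Qed.

Lemma sol_cosh k a : sol (- k^2) (fun x => exp (k*(a-x)) + exp (-(k*(a-x)))).
Proof.
  apply (sol_of _ (fun x => - k * (exp (k*(a-x)) - exp (-(k*(a-x))))) (fun x => k * k * (exp (k*(a-x)) + exp (-(k*(a-x)))))).
  - intros x. auto_derive; auto. unfold Rminus; ring.
  - intros x. auto_derive; auto. unfold Rminus; ring.
  - intros x. ring.
Qed.

Lemma sol_id : sol 0 (fun x => x).
Proof.
  apply (sol_of _ (fun _ => 1) (fun _ => 0)).
  - intros x. auto_derive; auto.
  - intros x. auto_derive; auto.
  - intros x. ring.
Qed.

Lemma sol_one : sol 0 (fun _ => 1).
Proof.
  apply (sol_of _ (fun _ => 0) (fun _ => 0)).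
  - intros x. auto_derive; auto.
  - intros x. auto_derive; auto.
  - intros x. ring.
Qed.

Lemma edge_rep lam L f S : edge_eq lam L f -> sol lam S -> f 0 = 0 -> S 0 = 0 ->
  (forall x, 0 < x <= L -> 0 < S x) -> 0 < L ->
  forall x, 0 <= x <= L -> f x = f L * S x / S L.
Proof.
  intros Hf HS Hf0 HS0 Hpos HL x Hx.
  assert (HSL := Hpos L ltac:(lra)).
  destruct (Req_dec x 0) as [->|Hx0].
  - rewrite Hf0, HS0. field. lra.
  - assert (HW : forall t, 0 <= t <= L -> f t * Derive S t - Derive f t * S t = 0).
    { intros t Ht. rewrite (wronskian lam L f S Hf HS t 0 Ht ltac:(lra)).
      rewrite Hf0, HS0. ring. }
    destruct Hf as [Hf1 _]. destruct HS as [HS1 _].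
    assert (E := ratio_const f S x L ltac:(lra) Hf1 HS1
       (fun t Ht => Hpos t ltac:(lra)) (fun t Ht => HW t ltac:(lra))).
    assert (0 < S x) by (apply Hpos; lra).
    assert (Q : f x = f x / S x * S x) by (field; lra). rewrite Q, E. field; lra.

Qed.

Lemma edge0_rep lam L f Rf : edge_eq lam L f -> sol lam Rf -> Derive f L = 0 ->
  Derive Rf L = 0 -> (forall x, 0 <= x <= L -> 0 < Rf x) -> 0 < L ->
  forall x, 0 <= x <= L -> f x = f 0 * Rf x / Rf 0.
Proof.
  intros Hf HS Hf0 HS0 Hpos HL x Hx.
  assert (HR0 := Hpos 0 ltac:(lra)).
  assert (HW : forall t, 0 <= t <= L -> f t * Derive Rf t - Derive f t * Rf t = 0).
  { intros t Ht. rewrite (wronskian lam L f Rf Hf HS t L Ht ltac:(lra)).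
    rewrite Hf0, HS0. ring. }
  destruct Hf as [Hf1 _]. destruct HS as [HS1 _].
  assert (E := ratio_const f Rf 0 x ltac:(lra) Hf1 HS1
     (fun t Ht => Hpos t ltac:(lra)) (fun t Ht => HW t ltac:(lra))).
  assert (0 < Rf x) by (apply Hpos; lra).
  assert (Q : f x = f x / Rf x * Rf x) by (field; lra). rewrite Q, <- E. field; lra.
Qed.

Lemma S_exists lam L : 0 < L -> (lam <= 0 \/ sqrt lam * L < PI) ->
  exists S, sol lam S /\ S 0 = 0 /\ forall x, 0 < x <= L -> 0 < S x.
Proof.
  intros HL Hl.
  destruct (Rlt_le_dec lam 0) as [Hn|Hp].
  - set (k := sqrt (- lam)).
    assert (Hk : 0 < k) by (apply sqrt_lt_R0; lra).
    assert (Hk2 : lam = - k^2) by (unfold k; simpl; rewrite Rmult_1_r, sqrt_sqrt; lra).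
    exists (fun x => exp (k*x) - exp (-(k*x))). split; [|split].
    + rewrite Hk2. apply sol_sinh.
    + simpl. rewrite Rmult_0_r, Ropp_0. ring.
    + intros x Hx. assert (exp (-(k*x)) < exp (k*x)); [|lra].
      apply exp_increasing. nra.
  - destruct (Req_dec lam 0) as [->|Hnz].
    + exists (fun x => x). split; [|split]; auto. apply sol_id. intros; lra.
    + destruct Hl as [Hl|Hl]; [lra|].
      set (k := sqrt lam).
      assert (Hk : 0 < k) by (apply sqrt_lt_R0; lra).
      assert (Hk2 : lam = k^2) by (unfold k; simpl; rewrite Rmult_1_r, sqrt_sqrt; lra).
      exists (fun x => sin (k*x)). split; [|split].
      * rewrite Hk2. apply sol_sin.
      * simpl. rewrite Rmult_0_r. apply sin_0.
      * intros x Hx. apply sin_gt_0. nra. fold k in Hl. nra.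
Qed.

Lemma R_exists lam l0 : 0 < l0 -> (lam <= 0 \/ sqrt lam * l0 < PI/2) ->
  exists Rf, sol lam Rf /\ Derive Rf l0 = 0 /\ forall x, 0 <= x <= l0 -> 0 < Rf x.
Proof.
  intros HL Hl.
  destruct (Rlt_le_dec lam 0) as [Hn|Hp].
  - set (k := sqrt (- lam)).
    assert (Hk : 0 < k) by (apply sqrt_lt_R0; lra).
    assert (Hk2 : lam = - k^2) by (unfold k; simpl; rewrite Rmult_1_r, sqrt_sqrt; lra).
    exists (fun x => exp (k*(l0-x)) + exp (-(k*(l0-x)))). split; [|split].
    + rewrite Hk2. apply sol_cosh.
    + apply is_derive_unique. auto_derive; auto. unfold Rminus.
      rewrite Rplus_opp_r, Rmult_0_r, Ropp_0. ring.
    + intros x Hx. assert (H1 := exp_pos (k*(l0-x))). assert (H2 := exp_pos (-(k*(l0-x)))). lra.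
  - destruct (Req_dec lam 0) as [->|Hnz].
    + exists (fun _ => 1). split; [|split]; auto. apply sol_one.
      apply is_derive_unique. auto_derive; auto. intros; lra.
    + destruct Hl as [Hl|Hl]; [lra|].
      set (k := sqrt lam).
      assert (Hk : 0 < k) by (apply sqrt_lt_R0; lra).
      assert (Hk2 : lam = k^2) by (unfold k; simpl; rewrite Rmult_1_r, sqrt_sqrt; lra).
      exists (fun x => cos (k*(l0-x))). split; [|split].
      * rewrite Hk2. apply sol_cos.
      * apply is_derive_unique. auto_derive; auto. unfold Rminus.
        rewrite Rplus_opp_r, Rmult_0_r, sin_0. ring.
      * intros x Hx. apply cos_gt_0. fold k in Hl. nra. fold k in Hl. nra.
Qed.

Lemma PI_gt3 : 3 < PI.
Proof. generalize PI2_3_2; lra. Qed.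

Lemma cos_ge_quad y : 0 <= y <= PI/2 -> 1 - y^2/2 <= cos y.
Proof.
  intros H. destruct (cos_bound y 0 ltac:(lra) ltac:(lra)) as [H1 _].
  unfold cos_approx, cos_term in H1; simpl in H1. lra.
Qed.

Lemma cos_le_quart y : 0 <= y <= PI/2 -> cos y <= 1 - y^2/2 + y^4/24.
Proof.
  intros H. destruct (cos_bound y 0 ltac:(lra) ltac:(lra)) as [_ H1].
  unfold cos_approx, cos_term in H1; simpl in H1. lra.
Qed.

Lemma sin_ge_cub y : 0 <= y <= PI -> y - y^3/6 <= sin y.
Proof.
  intros H. destruct (sin_bound y 0 ltac:(lra) ltac:(lra)) as [H1 _].
  unfold sin_approx, sin_term in H1; simpl in H1. lra.
Qed.

Lemma ycos_le_sin y : 0 < y < PI -> y * cos y <= sin y.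
Proof.
  intros H. assert (Hs := sin_gt_0 y ltac:(lra) ltac:(lra)).
  destruct (Rle_lt_dec (PI/2) y).
  - assert (cos y <= 0) by (apply cos_le_0; lra). nra.
  - assert (H1 := cos_le_quart y ltac:(lra)). assert (H2 := sin_ge_cub y ltac:(lra)).
    assert (y^2 <= 8). { generalize PI_4; nra. }
    assert (y * cos y <= y * (1 - y^2/2 + y^4/24)) by nra.
    nra.
Qed.

Lemma cot_term_le k l : 0 < k -> 0 < l -> k * l < PI -> k * cos (k*l) / sin (k*l) <= 1 / l.
Proof.
  intros Hk Hl H. assert (Hs := sin_gt_0 (k*l) ltac:(nra) H).
  assert (H1 := ycos_le_sin (k*l) ltac:(nra)).
  apply Rmult_le_reg_r with (sin (k*l) * l); [nra|].
  replace (k * cos (k*l) / sin (k*l) * (sin (k*l) * l)) with ((k*l) * cos (k*l)) by (field; lra).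
  replace (1 / l * (sin (k*l) * l)) with (sin (k*l)) by (field; lra). exact H1.
Qed.

Lemma cot_term_ge k l : 0 < k -> 0 < l -> k * l <= PI/2 -> (1 - (k*l)^2/2) / l <= k * cos (k*l) / sin (k*l).
Proof.
  intros Hk Hl H. assert (Hs := sin_gt_0 (k*l) ltac:(nra) ltac:(generalize PI2_Rlt_PI; lra)).
  assert (Hsx := sin_lt_x (k*l) ltac:(nra)).
  assert (Hc := cos_ge_quad (k*l) ltac:(nra)).
  assert (Hc0 : 0 <= cos (k*l)) by (apply cos_ge_0; nra).
  apply Rmult_le_reg_r with (sin (k*l) * l); [nra|].
  replace (k * cos (k*l) / sin (k*l) * (sin (k*l) * l)) with ((k*l) * cos (k*l)) by (field; lra).
  replace ((1 - (k*l)^2/2) / l * (sin (k*l) * l)) with (sin (k*l) * (1 - (k*l)^2/2)) by (field; lra).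
  assert (sin (k*l) * (1 - (k*l)^2/2) <= (k*l) * cos (k*l)).
  { destruct (Rle_lt_dec 0 (1 - (k*l)^2/2)); nra. }
  lra.
Qed.

Lemma tan_term_le k l : 0 < k -> 0 < l -> k * l <= 1 -> k * sin (k*l) / cos (k*l) <= 2 * k^2 * l.
Proof.
  intros Hk Hl H. assert (PI2_1 := PI2_1).
  assert (Hsx := sin_lt_x (k*l) ltac:(nra)).
  assert (Hc := cos_ge_quad (k*l) ltac:(nra)).
  assert (Hs := sin_gt_0 (k*l) ltac:(nra) ltac:(lra)).
  apply Rmult_le_reg_r with (cos (k*l)); [nra|].
  replace (k * sin (k*l) / cos (k*l) * cos (k*l)) with (k * sin (k*l)) by (field; nra).
  assert (cos (k*l) >= 1/2) by nra.
  assert (k * sin (k*l) <= k * (k*l)) by nra.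
  nra.
Qed.

Lemma cot_large L M : 0 < L -> exists k, PI/(2*L) < k < PI/L /\ k * cos (k*L) / sin (k*L) <= - M.
Proof.
  intros HL. assert (HP := PI_gt3). assert (HP4 := PI_4).
  set (d := Rmin (1/2) (PI / (4 * L * (Rabs M + 1)))).
  assert (HM : 0 < Rabs M + 1) by (generalize (Rabs_pos M); lra).
  assert (Hd0 : 0 < d). { unfold d. apply Rmin_glb_lt. lra. apply Rdiv_lt_0_compat; [lra|]. nra. }
  assert (Hd1 : d <= 1/2) by apply Rmin_l.
  assert (Hd2 : d <= PI / (4 * L * (Rabs M + 1))) by apply Rmin_r.
  exists ((PI - d)/L). split; [split|].
  - apply Rmult_lt_reg_r with L; auto. field_simplify; lra.
  - apply Rmult_lt_reg_r with L; auto. field_simplify; lra.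
  - replace ((PI - d)/L * L) with (PI - d) by (field; lra).
    rewrite Rtrigo_facts.cos_pi_minus, sin_PI_x.
    assert (Hs := sin_lt_x d Hd0). assert (Hs0 := sin_gt_0 d Hd0 ltac:(lra)).
    assert (Hc := cos_ge_quad d ltac:(lra)).
    assert (Hd3 : d * (4 * L * (Rabs M + 1)) <= PI).
    { unfold Rdiv in Hd2. apply Rmult_le_compat_r with (r := 4 * L * (Rabs M + 1)) in Hd2; [|nra].
      rewrite (Rmult_assoc PI), Rinv_l in Hd2; [lra|nra]. }
    assert (HMa := Rle_abs M).
    assert (Hk : PI / 2 <= PI - d) by lra.
    apply Rmult_le_reg_r with (sin d * L); [nra|].
    replace ((PI - d) / L * - cos d / sin d * (sin d * L)) with (- ((PI - d) * cos d)) by (field; lra).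
    assert (cos d >= 7/8) by nra.
    assert (A1 : M * sin d * L <= Rabs M * sin d * L).
    { apply Rmult_le_compat_r; [lra|]. apply Rmult_le_compat_r; lra. }
    assert (A2 : Rabs M * sin d * L <= Rabs M * d * L).
    { apply Rmult_le_compat_r; [lra|]. apply Rmult_le_compat_l; [apply Rabs_pos|lra]. }
    assert (A3 : Rabs M * d * L <= PI/4).
    { assert (0 <= d * L) by nra. nra. }
    assert (A4 : (PI/2) * (7/8) <= (PI - d) * cos d).
    { apply Rmult_le_compat; lra. }
    lra.
Qed.

Lemma tan_large l0 M : 0 < l0 -> exists k, PI/(4*l0) < k < PI/(2*l0) /\ M <= k * sin (k*l0) / cos (k*l0).
Proof.
  intros HL. assert (HP := PI_gt3). assert (HP4 := PI_4).
  set (d := Rmin (1/2) (PI / (8 * l0 * (Rabs M + 1)))).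
  assert (HM : 0 < Rabs M + 1) by (generalize (Rabs_pos M); lra).
  assert (Hd0 : 0 < d). { unfold d. apply Rmin_glb_lt. lra. apply Rdiv_lt_0_compat; [lra|]. nra. }
  assert (Hd1 : d <= 1/2) by apply Rmin_l.
  assert (Hd2 : d <= PI / (8 * l0 * (Rabs M + 1))) by apply Rmin_r.
  exists ((PI/2 - d)/l0). split; [split|].
  - apply Rmult_lt_reg_r with l0; auto. field_simplify; lra.
  - apply Rmult_lt_reg_r with l0; auto. field_simplify; lra.
  - replace ((PI/2 - d)/l0 * l0) with (PI/2 - d) by (field; lra).
    rewrite sin_shift, cos_shift.
    assert (Hs := sin_lt_x d Hd0). assert (Hs0 := sin_gt_0 d Hd0 ltac:(lra)).
    assert (Hc := cos_ge_quad d ltac:(lra)).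
    assert (Hd3 : d * (8 * l0 * (Rabs M + 1)) <= PI).
    { unfold Rdiv in Hd2. apply Rmult_le_compat_r with (r := 8 * l0 * (Rabs M + 1)) in Hd2; [|nra].
      rewrite (Rmult_assoc PI), Rinv_l in Hd2; [lra|nra]. }
    assert (HMa := Rle_abs M).
    apply Rmult_le_reg_r with (sin d * l0); [nra|].
    replace ((PI/2 - d) / l0 * cos d / sin d * (sin d * l0)) with ((PI/2 - d) * cos d) by (field; lra).
    assert (cos d >= 7/8) by nra.
    assert (A1 : M * sin d * l0 <= Rabs M * sin d * l0).
    { apply Rmult_le_compat_r; [lra|]. apply Rmult_le_compat_r; lra. }
    assert (A2 : Rabs M * sin d * l0 <= Rabs M * d * l0).
    { apply Rmult_le_compat_r; [lra|]. apply Rmult_le_compat_l; [apply Rabs_pos|lra]. }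
    assert (A3 : Rabs M * d * l0 <= PI/8).
    { assert (0 <= d * l0) by nra. nra. }
    assert (A4 : 1 * (7/8) <= (PI/2 - d) * cos d).
    { apply Rmult_le_compat; lra. }
    rewrite <- Rmult_assoc. lra.
Qed.

Lemma coth_bounds k l : 0 < k -> 0 < l ->
  k <= k * (exp (k*l) + exp (-(k*l))) / (exp (k*l) - exp (-(k*l))) <= k + 1/l.
Proof.
  intros Hk Hl. set (y := k*l). assert (Hy : 0 < y) by (unfold y; nra).
  rewrite exp_Ropp. set (E := exp y).
  assert (HE : 1 < E). { unfold E. rewrite <- exp_0. apply exp_increasing; lra. }
  assert (HE2 : 1 + 2*y < E * E).
  { unfold E. rewrite <- exp_plus. replace (y+y) with (2*y) by ring. apply exp_ineq1. lra. }
  assert (HEi : E - / E = (E*E - 1)/E) by (field; lra).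
  assert (HEp : E + / E = (E*E + 1)/E) by (field; lra).
  rewrite HEi, HEp.
  replace (k * ((E * E + 1) / E) / ((E * E - 1) / E)) with (k * (E*E+1) / (E*E-1)) by (field; nra).
  split.
  - apply Rmult_le_reg_r with (E*E-1); [nra|].
    replace (k * (E * E + 1) / (E * E - 1) * (E * E - 1)) with (k * (E*E+1)) by (field; nra). nra.
  - apply Rmult_le_reg_r with ((E*E-1)*l); [nra|].
    replace (k * (E * E + 1) / (E * E - 1) * ((E * E - 1) * l)) with (y * (E*E+1)) by (unfold y; field; nra).
    replace ((k + 1 / l) * ((E * E - 1) * l)) with ((y + 1) * (E*E-1)) by (unfold y; field; nra).
    nra.
Qed.

Lemma Derive_scal_fun (g : R -> R) c : Derive (fun x => c * g x) = fun x => c * Derive g x.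
Proof. apply functional_extensionality; intros; apply Derive_scal. Qed.

Lemma sol_scale lam g c : sol lam g -> sol lam (fun x => c * g x).
Proof.
  intros [H1 [H2 H3]]. split; [|split].
  - intros; apply ex_derive_scal; auto.
  - rewrite Derive_scal_fun. intros; apply ex_derive_scal; auto.
  - intros x. rewrite Derive_scal_fun, Derive_scal, H3. ring.
Qed.

Lemma in4 (P : nat -> Prop) : P 1%nat -> P 2%nat -> P 3%nat -> P 4%nat ->
  forall j, In j [1;2;3;4]%nat -> P j.
Proof. intros H1 H2 H3 H4 j Hj. simpl in Hj. intuition subst; auto. Qed.

Lemma eig1_of lam S (l : nat -> R) gA : sol lam S -> S 0 = 0 -> 0 < l 1%nat ->
  (forall j, In j [1;2;3;4]%nat -> S (l j) <> 0) ->
  - (Derive S (l 1%nat) / S (l 1%nat)) - (Derive S (l 2%nat) / S (l 2%nat))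
  - (Derive S (l 3%nat) / S (l 3%nat)) - (Derive S (l 4%nat) / S (l 4%nat)) = gA ->
  is_eigenvalue Gamma1 l gA lam.
Proof.
  intros HS HS0 Hl1 Hnz Hc.
  exists (fun j x => / S (l j) * S x).
  assert (V : forall j, In j [1;2;3;4]%nat -> / S (l j) * S (l j) = 1).
  { intros j Hj. field. auto. }
  split; [|split; [|split; [|split]]].
  - intros j _. apply sol_edge. apply sol_scale. auto.
  - intros j _. rewrite HS0. ring.
  - intros j k Hj Hk. rewrite V, V; auto.
  - simpl. rewrite !Derive_scal.
    assert (H1 := Hnz 1%nat ltac:(simpl; tauto)). assert (H2 := Hnz 2%nat ltac:(simpl; tauto)).
    assert (H3 := Hnz 3%nat ltac:(simpl; tauto)). assert (H4 := Hnz 4%nat ltac:(simpl; tauto)).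
    rewrite <- Hc. field. repeat split; auto.
  - exists 1%nat, (l 1%nat). split; [simpl; tauto|]. split; [lra|].
    rewrite V by (simpl; tauto). lra.
Qed.

Lemma eig2_of lam S Rf (l : nat -> R) gA : sol lam S -> S 0 = 0 -> sol lam Rf ->
  Derive Rf (l 0%nat) = 0 -> Rf 0 <> 0 -> 0 < l 0%nat ->
  (forall j, In j [1;2;3;4]%nat -> S (l j) <> 0) ->
  Derive Rf 0 / Rf 0 - (Derive S (l 1%nat) / S (l 1%nat)) - (Derive S (l 2%nat) / S (l 2%nat))
  - (Derive S (l 3%nat) / S (l 3%nat)) - (Derive S (l 4%nat) / S (l 4%nat)) = 0 ->
  is_eigenvalue Gamma2 l gA lam.
Proof.
  intros HS HS0 HR HRl HR0 Hl0 Hnz Hc.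
  exists (fun j x => match j with O => / Rf 0 * Rf x | _ => / S (l j) * S x end).
  assert (V : forall j, In j [1;2;3;4]%nat -> / S (l j) * S (l j) = 1).
  { intros j Hj. field. auto. }
  split; [|split; [|split; [|split]]].
  - intros j _. destruct j; apply sol_edge; apply sol_scale; auto.
  - intros j Hj. apply (in4 (fun j => match j with O => / Rf 0 * Rf 0 | _ => / S (l j) * S 0 end = 0)); auto;
    rewrite HS0; ring.
  - intros j k Hj Hk.
    assert (E : forall j, In j [1;2;3;4]%nat -> (match j with O => / Rf 0 * Rf (l j) | _ => / S (l j) * S (l j) end) = 1).
    { apply in4; apply V; simpl; tauto. }
    rewrite (E j Hj), (E k Hk). auto.
  - simpl. rewrite !Derive_scal.
    assert (H1 := Hnz 1%nat ltac:(simpl; tauto)). assert (H2 := Hnz 2%nat ltac:(simpl; tauto)).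
    assert (H3 := Hnz 3%nat ltac:(simpl; tauto)). assert (H4 := Hnz 4%nat ltac:(simpl; tauto)).
    split; [field; auto|]. split.
    + rewrite Rmult_0_l. unfold Rdiv in Hc. lra.
    + rewrite HRl. ring.
  - exists 0%nat, 0. split; [simpl; tauto|]. split; [lra|].
    simpl. rewrite Rinv_l; [lra|auto].
Qed.

Lemma cont_of_ex (f : R -> R) : (forall x, ex_derive f x) -> continuity f.
Proof.
  intros H x. destruct (H x) as [d Hd]. eapply cont_of_derive; eauto.
Qed.

Lemma max4 a b c d : let L := Rmax (Rmax a b) (Rmax c d) in
  a <= L /\ b <= L /\ c <= L /\ d <= L /\ (L = a \/ L = b \/ L = c \/ L = d).
Proof.
  intros L. unfold L. unfold Rmax.
  repeat destruct (Rle_dec _ _); repeat split; lra.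
Qed.

Definition T k l := k * cos (k*l) / sin (k*l).

Lemma exist_G1_pos (l : nat -> R) gA :
  0 < l 1%nat -> 0 < l 2%nat -> 0 < l 3%nat -> 0 < l 4%nat ->
  0 < gA + 1 / l 1%nat + 1 / l 2%nat + 1 / l 3%nat + 1 / l 4%nat ->
  exists k0, 0 < k0 /\ k0 * l 1%nat < PI /\ k0 * l 2%nat < PI /\ k0 * l 3%nat < PI /\ k0 * l 4%nat < PI /\
    gA + T k0 (l 1%nat) + T k0 (l 2%nat) + T k0 (l 3%nat) + T k0 (l 4%nat) = 0.
Proof.
  set (l1 := l 1%nat); set (l2 := l 2%nat); set (l3 := l 3%nat); set (l4 := l 4%nat).
  intros H1 H2 H3 H4 HF.
  set (F0 := gA + 1 / l1 + 1 / l2 + 1 / l3 + 1 / l4) in *.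
  destruct (max4 l1 l2 l3 l4) as [M1 [M2 [M3 [M4 Mx]]]].
  set (L := Rmax (Rmax l1 l2) (Rmax l3 l4)) in *.
  assert (HL : 0 < L) by lra.
  assert (HP := PI_gt3).
  set (G := fun k => gA + T k l1 + T k l2 + T k l3 + T k l4).
  set (D := fun k => gA * (sin (k*l1) * sin (k*l2) * sin (k*l3) * sin (k*l4)) +
     k * (cos (k*l1) * sin (k*l2) * sin (k*l3) * sin (k*l4) + sin (k*l1) * cos (k*l2) * sin (k*l3) * sin (k*l4)
        + sin (k*l1) * sin (k*l2) * cos (k*l3) * sin (k*l4) + sin (k*l1) * sin (k*l2) * sin (k*l3) * cos (k*l4))).
  assert (DG : forall k, 0 < k -> k * L < PI -> D k = G k * (sin (k*l1) * sin (k*l2) * sin (k*l3) * sin (k*l4))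
     /\ 0 < sin (k*l1) * sin (k*l2) * sin (k*l3) * sin (k*l4)).
  { intros k Hk HkL.
    assert (S1 : 0 < sin (k*l1)) by (apply sin_gt_0; nra).
    assert (S2 : 0 < sin (k*l2)) by (apply sin_gt_0; nra).
    assert (S3 : 0 < sin (k*l3)) by (apply sin_gt_0; nra).
    assert (S4 : 0 < sin (k*l4)) by (apply sin_gt_0; nra).
    split. - unfold D, G, T. field. lra.
    - repeat apply Rmult_lt_0_compat; auto. }
  set (SL := l1 + l2 + l3 + l4).
  set (ka := Rmin (PI/(4*L)) (Rmin 1 (F0/(SL+1)))).
  assert (Hka0 : 0 < ka).
  { unfold ka. apply Rmin_glb_lt. apply Rdiv_lt_0_compat; lra.
    apply Rmin_glb_lt. lra. apply Rdiv_lt_0_compat; unfold SL; lra. }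
  assert (Hka1 : ka <= PI/(4*L)) by apply Rmin_l.
  assert (Hka2 : ka <= 1) by (eapply Rle_trans; [apply Rmin_r|apply Rmin_l]).
  assert (Hka3 : ka <= F0/(SL+1)) by (eapply Rle_trans; [apply Rmin_r|apply Rmin_r]).
  assert (HkaL : ka * L <= PI/4).
  { apply Rmult_le_compat_r with (r := L) in Hka1; [|lra].
    replace (PI / (4 * L) * L) with (PI/4) in Hka1 by (field; lra). lra. }
  assert (Gka : 0 < G ka).
  { unfold G.
    assert (B : forall lj, 0 < lj -> lj <= L -> 1/lj - ka^2 * lj / 2 <= T ka lj).
    { intros lj Hlj HlL. unfold T.
      replace (1/lj - ka^2 * lj / 2) with ((1 - (ka*lj)^2/2)/lj) by (field; lra).
      apply cot_term_ge; auto. nra. }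
    assert (B1 := B l1 H1 M1). assert (B2 := B l2 H2 M2).
    assert (B3 := B l3 H3 M3). assert (B4 := B l4 H4 M4).
    assert (Hk2 : ka^2 <= ka) by nra.
    assert (Hk3 : ka * (SL + 1) <= F0).
    { apply Rmult_le_compat_r with (r := SL+1) in Hka3; [|unfold SL; lra].
      replace (F0 / (SL + 1) * (SL + 1)) with F0 in Hka3 by (field; unfold SL; lra). lra. }
    assert (ka^2 * SL <= ka * SL) by (apply Rmult_le_compat_r; unfold SL; lra).
    unfold SL in *. unfold F0 in *. nra. }
  destruct (cot_large L (Rabs gA + 1/l1 + 1/l2 + 1/l3 + 1/l4 + 1) HL) as [kb [[Hkb1 Hkb2] HkbT]].
  assert (HkbL : kb * L < PI).
  { apply Rmult_lt_compat_r with (r := L) in Hkb2; [|lra].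
    replace (PI / L * L) with PI in Hkb2 by (field; lra). lra. }
  assert (Hkb0 : 0 < kb).
  { assert (0 < PI/(2*L)) by (apply Rdiv_lt_0_compat; lra). lra. }
  assert (Gkb : G kb < 0).
  { unfold G.
    assert (B : forall lj, 0 < lj -> lj <= L -> T kb lj <= 1/lj).
    { intros lj Hlj HlL. unfold T. apply cot_term_le; auto. nra. }
    assert (B1 := B l1 H1 M1). assert (B2 := B l2 H2 M2).
    assert (B3 := B l3 H3 M3). assert (B4 := B l4 H4 M4).
    assert (HA := Rle_abs gA). fold (T kb L) in HkbT.
    assert (0 < 1/l1) by (apply Rdiv_lt_0_compat; lra). assert (0 < 1/l2) by (apply Rdiv_lt_0_compat; lra). assert (0 < 1/l3) by (apply Rdiv_lt_0_compat; lra). assert (0 < 1/l4) by (apply Rdiv_lt_0_compat; lra).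
    destruct Mx as [E|[E|[E|E]]]; rewrite E in HkbT; lra. }
  assert (Hab : ka < kb).
  { assert (PI/(4*L) < PI/(2*L)).
    { unfold Rdiv. apply Rmult_lt_compat_l; [lra|]. apply Rinv_lt_contravar; nra. }
    lra. }
  destruct (IVT (fun k => - D k) ka kb) as [k0 [Hk0 HD0]].
  - apply cont_of_ex. intros x. unfold D. auto_derive. auto.
  - exact Hab.
  - destruct (DG ka Hka0 ltac:(lra)) as [E P]. rewrite E. nra.
  - destruct (DG kb Hkb0 HkbL) as [E P]. rewrite E. nra.
  - assert (Hk0p : 0 < k0) by lra.
    assert (Hk0L : k0 * L < PI) by nra.
    destruct (DG k0 Hk0p Hk0L) as [E P].
    exists k0. repeat split; try nra.
    assert (G k0 * (sin (k0*l1) * sin (k0*l2) * sin (k0*l3) * sin (k0*l4)) = 0) by lra.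
    apply Rmult_integral in H. destruct H; [exact H|lra].
Qed.

Definition Th k l := k * (exp (k*l) + exp (-(k*l))) / (exp (k*l) - exp (-(k*l))).

Lemma sh_pos k l : 0 < k -> 0 < l -> 0 < exp (k*l) - exp (-(k*l)).
Proof. intros. assert (exp (-(k*l)) < exp (k*l)) by (apply exp_increasing; nra). lra. Qed.

Lemma exist_G1_neg (l : nat -> R) gA :
  0 < l 1%nat -> 0 < l 2%nat -> 0 < l 3%nat -> 0 < l 4%nat ->
  gA + 1 / l 1%nat + 1 / l 2%nat + 1 / l 3%nat + 1 / l 4%nat < 0 ->
  exists k0, 0 < k0 /\
    gA + Th k0 (l 1%nat) + Th k0 (l 2%nat) + Th k0 (l 3%nat) + Th k0 (l 4%nat) = 0.
Proof.
  set (l1 := l 1%nat); set (l2 := l 2%nat); set (l3 := l 3%nat); set (l4 := l 4%nat).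
  intros H1 H2 H3 H4 HF.
  set (F0 := gA + 1 / l1 + 1 / l2 + 1 / l3 + 1 / l4) in *.
  set (e := fun k l => exp (k*l) - exp (-(k*l))).
  set (h := fun k l => exp (k*l) + exp (-(k*l))).
  set (G := fun k => gA + Th k l1 + Th k l2 + Th k l3 + Th k l4).
  set (D := fun k => gA * (e k l1 * e k l2 * e k l3 * e k l4) +
     k * (h k l1 * e k l2 * e k l3 * e k l4 + e k l1 * h k l2 * e k l3 * e k l4
        + e k l1 * e k l2 * h k l3 * e k l4 + e k l1 * e k l2 * e k l3 * h k l4)).
  assert (DG : forall k, 0 < k -> D k = G k * (e k l1 * e k l2 * e k l3 * e k l4)
     /\ 0 < e k l1 * e k l2 * e k l3 * e k l4).
  { intros k Hk.
    assert (S1 := sh_pos k l1 Hk H1). assert (S2 := sh_pos k l2 Hk H2).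
    assert (S3 := sh_pos k l3 Hk H3). assert (S4 := sh_pos k l4 Hk H4).
    split. - unfold D, G, Th, e, h. field. repeat split; lra.
    - unfold e; repeat apply Rmult_lt_0_compat; auto. }
  set (ka := - F0 / 8).
  assert (Hka : 0 < ka) by (unfold ka; lra).
  set (kb := ka + Rabs gA + 1).
  assert (HA := Rle_abs gA). assert (HA' := Rabs_pos gA).
  assert (Hkb : ka < kb) by (unfold kb; lra).
  assert (Gka : G ka < 0).
  { unfold G.
    destruct (coth_bounds ka l1 Hka H1) as [_ B1]. destruct (coth_bounds ka l2 Hka H2) as [_ B2].
    destruct (coth_bounds ka l3 Hka H3) as [_ B3]. destruct (coth_bounds ka l4 Hka H4) as [_ B4].
    assert (EF : F0 = gA + 1/l1 + 1/l2 + 1/l3 + 1/l4) by reflexivity. unfold Th. unfold ka in *. lra. }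
  assert (Gkb : 0 < G kb).
  { unfold G. assert (Hkb0 : 0 < kb) by lra.
    destruct (coth_bounds kb l1 Hkb0 H1) as [B1 _]. destruct (coth_bounds kb l2 Hkb0 H2) as [B2 _].
    destruct (coth_bounds kb l3 Hkb0 H3) as [B3 _]. destruct (coth_bounds kb l4 Hkb0 H4) as [B4 _].
    assert (EK : kb = ka + Rabs gA + 1) by reflexivity. assert (HA2 := Rle_abs (-gA)). rewrite Rabs_Ropp in HA2. unfold Th. lra. }
  destruct (IVT D ka kb) as [k0 [Hk0 HD0]].
  - apply cont_of_ex. intros x. unfold D, e, h. auto_derive. auto.
  - exact Hkb.
  - destruct (DG ka Hka) as [E P]. rewrite E. nra.
  - destruct (DG kb ltac:(lra)) as [E P]. rewrite E. nra.
  - assert (Hk0p : 0 < k0) by lra.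
    destruct (DG k0 Hk0p) as [E P].
    exists k0. split; auto.
    assert (G k0 * (e k0 l1 * e k0 l2 * e k0 l3 * e k0 l4) = 0) by lra.
    apply Rmult_integral in H. destruct H; [exact H|lra].
Qed.

Definition Tt k l := k * sin (k*l) / cos (k*l).

Lemma exist_G2 (l : nat -> R) :
  0 < l 0%nat -> 0 < l 1%nat -> 0 < l 2%nat -> 0 < l 3%nat -> 0 < l 4%nat ->
  exists k0, 0 < k0 /\ k0 * l 1%nat < PI /\ k0 * l 2%nat < PI /\ k0 * l 3%nat < PI /\ k0 * l 4%nat < PI /\
    k0 * l 0%nat < PI/2 /\
    T k0 (l 1%nat) + T k0 (l 2%nat) + T k0 (l 3%nat) + T k0 (l 4%nat) - Tt k0 (l 0%nat) = 0.
Proof.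
  set (l0 := l 0%nat); set (l1 := l 1%nat); set (l2 := l 2%nat); set (l3 := l 3%nat); set (l4 := l 4%nat).
  intros H0 H1 H2 H3 H4.
  set (F0 := 1 / l1 + 1 / l2 + 1 / l3 + 1 / l4).
  assert (I1 : 0 < 1/l1) by (apply Rdiv_lt_0_compat; lra). assert (I2 : 0 < 1/l2) by (apply Rdiv_lt_0_compat; lra).
  assert (I3 : 0 < 1/l3) by (apply Rdiv_lt_0_compat; lra). assert (I4 : 0 < 1/l4) by (apply Rdiv_lt_0_compat; lra).
  assert (HF : 0 < F0) by (unfold F0; lra).
  destruct (max4 l1 l2 l3 l4) as [M1 [M2 [M3 [M4 Mx]]]].
  set (L := Rmax (Rmax l1 l2) (Rmax l3 l4)) in *.
  assert (HL : 0 < L) by lra.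
  assert (HP := PI_gt3).
  set (G := fun k => T k l1 + T k l2 + T k l3 + T k l4 - Tt k l0).
  set (P := fun k => sin (k*l1) * sin (k*l2) * sin (k*l3) * sin (k*l4) * cos (k*l0)).
  set (D := fun k =>
     k * (cos (k*l1) * sin (k*l2) * sin (k*l3) * sin (k*l4) + sin (k*l1) * cos (k*l2) * sin (k*l3) * sin (k*l4)
        + sin (k*l1) * sin (k*l2) * cos (k*l3) * sin (k*l4) + sin (k*l1) * sin (k*l2) * sin (k*l3) * cos (k*l4)) * cos (k*l0)
     - k * sin (k*l0) * (sin (k*l1) * sin (k*l2) * sin (k*l3) * sin (k*l4))).
  assert (DG : forall k, 0 < k -> k * L < PI -> k * l0 < PI/2 -> D k = G k * P k /\ 0 < P k).
  { intros k Hk HkL Hk0.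
    assert (S1 : 0 < sin (k*l1)) by (apply sin_gt_0; nra).
    assert (S2 : 0 < sin (k*l2)) by (apply sin_gt_0; nra).
    assert (S3 : 0 < sin (k*l3)) by (apply sin_gt_0; nra).
    assert (S4 : 0 < sin (k*l4)) by (apply sin_gt_0; nra).
    assert (C0 : 0 < cos (k*l0)) by (apply cos_gt_0; nra).
    split. - unfold D, G, P, T, Tt. field. lra.
    - unfold P; repeat apply Rmult_lt_0_compat; auto. }
  set (SL := l1 + l2 + l3 + l4).
  set (ka := Rmin (PI/(4*L)) (Rmin (1/(2*l0)) (Rmin 1 (F0/(SL + 4*l0 + 1))))).
  assert (Hka0 : 0 < ka).
  { unfold ka. apply Rmin_glb_lt. apply Rdiv_lt_0_compat; lra.
    apply Rmin_glb_lt. apply Rdiv_lt_0_compat; lra.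
    apply Rmin_glb_lt. lra. apply Rdiv_lt_0_compat; unfold SL; lra. }
  assert (Hka1 : ka <= PI/(4*L)) by apply Rmin_l.
  assert (Hka4 : ka <= 1/(2*l0)) by (eapply Rle_trans; [apply Rmin_r|apply Rmin_l]).
  assert (Hka2 : ka <= 1) by (eapply Rle_trans; [apply Rmin_r|]; eapply Rle_trans; [apply Rmin_r|apply Rmin_l]).
  assert (Hka3 : ka <= F0/(SL + 4*l0 + 1)) by (eapply Rle_trans; [apply Rmin_r|]; eapply Rle_trans; [apply Rmin_r|apply Rmin_r]).
  assert (HkaL : ka * L <= PI/4).
  { apply Rmult_le_compat_r with (r := L) in Hka1; [|lra].
    replace (PI / (4 * L) * L) with (PI/4) in Hka1 by (field; lra). lra. }
  assert (Hkal0 : ka * l0 <= 1/2).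
  { apply Rmult_le_compat_r with (r := l0) in Hka4; [|lra].
    replace (1 / (2 * l0) * l0) with (1/2) in Hka4 by (field; lra). lra. }
  assert (Gka : 0 < G ka).
  { unfold G.
    assert (B : forall lj, 0 < lj -> lj <= L -> 1/lj - ka^2 * lj / 2 <= T ka lj).
    { intros lj Hlj HlL. unfold T.
      replace (1/lj - ka^2 * lj / 2) with ((1 - (ka*lj)^2/2)/lj) by (field; lra).
      apply cot_term_ge; auto. nra. }
    assert (B1 := B l1 H1 M1). assert (B2 := B l2 H2 M2).
    assert (B3 := B l3 H3 M3). assert (B4 := B l4 H4 M4).
    assert (B0 := tan_term_le ka l0 Hka0 H0 ltac:(lra)). fold (Tt ka l0) in B0.
    assert (Hk2 : ka^2 <= ka) by nra.
    assert (Hk3 : ka * (SL + 4*l0 + 1) <= F0).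
    { apply Rmult_le_compat_r with (r := SL + 4*l0 + 1) in Hka3; [|unfold SL; lra].
      replace (F0 / (SL + 4*l0 + 1) * (SL + 4*l0 + 1)) with F0 in Hka3 by (field; unfold SL; lra). lra. }
    assert (ka^2 * (SL + 4*l0) <= ka * (SL + 4*l0)) by (apply Rmult_le_compat_r; unfold SL; lra).
    assert (EF : F0 = 1/l1 + 1/l2 + 1/l3 + 1/l4) by reflexivity.
    unfold SL in *. lra. }
  assert (Hab0 : 1/(2*l0) < PI/(4*l0)).
  { apply Rmult_lt_reg_r with (4*l0); [lra|]. replace (1/(2*l0) * (4*l0)) with 2 by (field; lra). replace (PI/(4*l0) * (4*l0)) with PI by (field; lra). lra. }
  assert (HabL : PI/(4*L) < PI/(2*L)).
  { unfold Rdiv. apply Rmult_lt_compat_l; [lra|]. apply Rinv_lt_contravar; nra. }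
  assert (HM : exists kb, ka < kb /\ kb * L < PI /\ kb * l0 < PI/2 /\ G kb < 0).
  { assert (B : forall kb lj, 0 < kb -> 0 < lj -> lj <= L -> kb * L < PI -> T kb lj <= 1/lj).
    { intros kb lj Hkb Hlj HlL HkL. unfold T. apply cot_term_le; auto. nra. }
    destruct (Rle_lt_dec L (2*l0)) as [HL2|HL2].
    - destruct (tan_large l0 (F0 + 1) H0) as [kb [[Hkb1 Hkb2] HT]].
      fold (Tt kb l0) in HT.
      assert (0 < PI/(4*l0)) by (apply Rdiv_lt_0_compat; lra).
      assert (HkbL : kb * L < PI).
      { assert (kb * L <= kb * (2*l0)) by (apply Rmult_le_compat_l; lra).
        apply Rmult_lt_compat_r with (r := 2*l0) in Hkb2; [|lra].
        replace (PI / (2*l0) * (2*l0)) with PI in Hkb2 by (field; lra). lra. }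
      exists kb. split; [lra|]. split; [auto|]. split.
      + apply Rmult_lt_compat_r with (r := l0) in Hkb2; [|lra].
        replace (PI / (2*l0) * l0) with (PI/2) in Hkb2 by (field; lra). lra.
      + unfold G.
        assert (B1 := B kb l1 ltac:(lra) H1 M1 HkbL). assert (B2 := B kb l2 ltac:(lra) H2 M2 HkbL).
        assert (B3 := B kb l3 ltac:(lra) H3 M3 HkbL). assert (B4 := B kb l4 ltac:(lra) H4 M4 HkbL).
        assert (EF : F0 = 1/l1 + 1/l2 + 1/l3 + 1/l4) by reflexivity. lra.
    - destruct (cot_large L (F0 + 1) HL) as [kb [[Hkb1 Hkb2] HkbT]].
      assert (HkbL : kb * L < PI).
      { apply Rmult_lt_compat_r with (r := L) in Hkb2; [|lra].
        replace (PI / L * L) with PI in Hkb2 by (field; lra). lra. }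
      assert (0 < PI/(2*L)) by (apply Rdiv_lt_0_compat; lra).
      assert (Hkb0 : kb * l0 < PI/2).
      { assert (kb * l0 * 2 < kb * L) by nra. lra. }
      exists kb. split; [lra|]. split; [auto|]. split; [auto|].
      unfold G.
      assert (B1 := B kb l1 ltac:(lra) H1 M1 HkbL). assert (B2 := B kb l2 ltac:(lra) H2 M2 HkbL).
      assert (B3 := B kb l3 ltac:(lra) H3 M3 HkbL). assert (B4 := B kb l4 ltac:(lra) H4 M4 HkbL).
      assert (T0 : 0 <= Tt kb l0).
      { unfold Tt. assert (0 < sin (kb*l0)) by (apply sin_gt_0; nra).
        assert (0 < cos (kb*l0)) by (apply cos_gt_0; nra).
        apply Rlt_le. apply Rdiv_lt_0_compat; [nra|lra]. }
      fold (T kb L) in HkbT.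
      assert (EF : F0 = 1/l1 + 1/l2 + 1/l3 + 1/l4) by reflexivity.
      destruct Mx as [E|[E|[E|E]]]; rewrite E in HkbT; lra. }
  destruct HM as [kb [Hab [HkbL [Hkb0 Gkb]]]].
  destruct (IVT (fun k => - D k) ka kb) as [k0 [Hk0 HD0]].
  - apply cont_of_ex. intros x. unfold D. auto_derive. auto.
  - exact Hab.
  - destruct (DG ka Hka0 ltac:(lra) ltac:(lra)) as [E PP]. rewrite E. nra.
  - assert (0 < kb) by lra. destruct (DG kb ltac:(lra) HkbL Hkb0) as [E PP]. rewrite E. nra.
  - assert (Hk0p : 0 < k0) by lra.
    assert (Hk0L : k0 * L < PI) by nra.
    assert (Hk00 : k0 * l0 < PI/2) by nra.
    destruct (DG k0 Hk0p Hk0L Hk00) as [E PP].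
    exists k0. repeat split; try nra.
    assert (G k0 * P k0 = 0) by lra.
    apply Rmult_integral in H. destruct H; [exact H|lra].
Qed.

Definition Bnd (G : graph_kind) (l : nat -> R) (lam : R) : Prop :=
  lam <= 0 \/ ((forall j, In j [1;2;3;4]%nat -> sqrt lam * l j < PI) /\
               (G = Gamma2 -> sqrt lam * l 0%nat < PI/2)).

Lemma Bnd_mono G l lam lam' : (forall j, In j (edges G) -> 0 < l j) ->
  lam <= lam' -> Bnd G l lam' -> Bnd G l lam.
Proof.
  intros Hl Hle [H|[H1 H2]].
  - left; lra.
  - destruct (Rle_lt_dec lam 0) as [h|h]; [left; auto|right].
    assert (Hs := sqrt_le_1_alt _ _ Hle).
    split.
    + intros j Hj. assert (0 < l j) by (apply Hl; destruct G; simpl in *; tauto).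
      specialize (H1 j Hj). nra.
    + intros HG. subst G. assert (0 < l 0%nat) by (apply Hl; simpl; tauto).
      specialize (H2 eq_refl). nra.
Qed.

Lemma Did y : Derive (fun x => x) y = 1.
Proof. apply is_derive_unique. auto_derive; auto. Qed.

Lemma Dsin k y : Derive (fun x => sin (k*x)) y = k * cos (k*y).
Proof. apply is_derive_unique. auto_derive; auto. ring. Qed.

Lemma Dsinh k y : Derive (fun x => exp (k*x) - exp (-(k*x))) y = k * (exp (k*y) + exp (-(k*y))).
Proof. apply is_derive_unique. auto_derive; auto. ring. Qed.

Lemma Dcos k a y : Derive (fun x => cos (k*(a-x))) y = k * sin (k*(a-y)).
Proof. apply is_derive_unique. auto_derive; auto. unfold Rminus; ring. Qed.

Lemma exist_eig G l gA : (forall j, In j (edges G) -> 0 < l j) ->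
  exists lam0, is_eigenvalue G l gA lam0 /\ Bnd G l lam0.
Proof.
  intros Hl.
  assert (H1 : 0 < l 1%nat) by (apply Hl; destruct G; simpl; tauto).
  assert (H2 : 0 < l 2%nat) by (apply Hl; destruct G; simpl; tauto).
  assert (H3 : 0 < l 3%nat) by (apply Hl; destruct G; simpl; tauto).
  assert (H4 : 0 < l 4%nat) by (apply Hl; destruct G; simpl; tauto).
  assert (Hnz : forall k, 0 < k -> (forall j, In j [1;2;3;4]%nat -> k * l j < PI) ->
            forall j, In j [1;2;3;4]%nat -> sin (k * l j) <> 0).
  { intros k Hk Hb j Hj. assert (0 < l j) by (simpl in Hj; intuition subst; lra).
    assert (0 < sin (k * l j)) by (apply sin_gt_0; [nra|auto]). lra. }
  destruct G.
  - set (F0 := gA + 1 / l 1%nat + 1 / l 2%nat + 1 / l 3%nat + 1 / l 4%nat).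
    destruct (Rtotal_order F0 0) as [Hn|[Hz|Hp]].
    + destruct (exist_G1_neg l gA H1 H2 H3 H4 Hn) as [k0 [Hk0 HG]].
      exists (- k0^2). split; [|left; nra].
      apply (eig1_of _ (fun x => exp (k0*x) - exp (-(k0*x)))); auto.
      * apply sol_sinh.
      * rewrite Rmult_0_r, Ropp_0. ring.
      * intros j Hj. assert (0 < l j) by (simpl in Hj; intuition subst; lra).
        assert (Hs := sh_pos k0 (l j) Hk0 H). lra.
      * rewrite !Dsinh. unfold Th in HG. lra.
    + exists 0. split; [|left; lra].
      apply (eig1_of _ (fun x => x)); auto.
      * apply sol_id.
      * intros j Hj. assert (0 < l j) by (simpl in Hj; intuition subst; lra). lra.
      * rewrite !Did. unfold F0 in Hz. lra.
    + destruct (exist_G1_pos l gA H1 H2 H3 H4 Hp) as [k0 [Hk0 [B1 [B2 [B3 [B4 HG]]]]]].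
      assert (Hb : forall j, In j [1;2;3;4]%nat -> k0 * l j < PI).
      { apply in4; auto. }
      exists (k0^2). split.
      * apply (eig1_of _ (fun x => sin (k0*x))); auto.
        -- apply sol_sin.
        -- rewrite Rmult_0_r. apply sin_0.
        -- rewrite !Dsin. unfold T in HG. lra.
      * right. rewrite sqrt_pow2 by lra. split; auto. intros E; discriminate.
  - assert (H0 : 0 < l 0%nat) by (apply Hl; simpl; tauto).
    destruct (exist_G2 l H0 H1 H2 H3 H4) as [k0 [Hk0 [B1 [B2 [B3 [B4 [B0 HG]]]]]]].
    assert (Hb : forall j, In j [1;2;3;4]%nat -> k0 * l j < PI).
    { apply in4; auto. }
    exists (k0^2). split.
    + apply (eig2_of _ (fun x => sin (k0*x)) (fun x => cos (k0*(l 0%nat - x)))); auto.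
      * apply sol_sin.
      * rewrite Rmult_0_r. apply sin_0.
      * apply sol_cos.
      * rewrite Dcos, Rminus_diag, Rmult_0_r, sin_0. ring.
      * rewrite Rminus_0_r. assert (0 < cos (k0 * l 0%nat)) by (apply cos_gt_0; nra). lra.
      * rewrite Dcos, !Dsin, Rminus_0_r. unfold T, Tt in HG. lra.
    + right. rewrite sqrt_pow2 by lra. split; auto.
Qed.

Lemma edges_cases G j : In j (edges G) -> In j [1;2;3;4]%nat \/ (G = Gamma2 /\ j = 0%nat).
Proof. destruct G; simpl; intuition. Qed.

Lemma edges_in G j : In j [1;2;3;4]%nat -> In j (edges G).
Proof. destruct G; simpl; intuition. Qed.

Theorem lemma4p3 (G : graph_kind) (l : nat -> R) (gA lam1 : R) :
  (forall j, In j (edges G) -> 0 < l j) ->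
  is_first_eigenvalue G l gA lam1 ->
  is_simple_eigenvalue G l gA lam1 /\
  (l 1%nat = l 2%nat -> l 2%nat = l 3%nat -> l 3%nat = l 4%nat ->
   forall phi, is_eigenfunction G l gA lam1 phi ->
     (forall j k x, In j [1;2;3;4]%nat -> In k [1;2;3;4]%nat ->
        0 <= x <= l 1%nat -> phi j x = phi k x) /\
     (forall j x, In j (edges G) -> 0 <= x <= l j ->
        (j = 0%nat \/ 0 < x) -> phi j x <> 0)).
Proof.
  intros Hl [_ Hmin].
  destruct (exist_eig G l gA Hl) as [lam0 [He0 Hb0]].
  assert (Hb1 : Bnd G l lam1) by (apply (Bnd_mono G l lam1 lam0); auto).
  assert (H1 : 0 < l 1%nat) by (apply Hl; destruct G; simpl; tauto).
  assert (H2 : 0 < l 2%nat) by (apply Hl; destruct G; simpl; tauto).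
  assert (H3 : 0 < l 3%nat) by (apply Hl; destruct G; simpl; tauto).
  assert (H4 : 0 < l 4%nat) by (apply Hl; destruct G; simpl; tauto).
  destruct (max4 (l 1%nat) (l 2%nat) (l 3%nat) (l 4%nat)) as [M1 [M2 [M3 [M4 Mx]]]].
  set (L := Rmax (Rmax (l 1%nat) (l 2%nat)) (Rmax (l 3%nat) (l 4%nat))) in *.
  assert (HL : 0 < L) by lra.
  assert (HLj : forall j, In j [1;2;3;4]%nat -> 0 < l j /\ l j <= L).
  { apply in4; auto. }
  assert (HSL : lam1 <= 0 \/ sqrt lam1 * L < PI).
  { destruct Hb1 as [h|[hb _]]; [left; auto|right].
    destruct Mx as [E|[E|[E|E]]]; rewrite E; apply hb; simpl; tauto. }
  destruct (S_exists lam1 L HL HSL) as [S [HS [HS0 HSp]]].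
  assert (REP : forall phi, is_eigenfunction G l gA lam1 phi -> forall j x, In j [1;2;3;4]%nat ->
      0 <= x <= l j -> phi j x = phi 1%nat (l 1%nat) * S x / S (l j)).
  { intros phi [He [HD [Hc _]]] j x Hj Hx.
    destruct (HLj j Hj) as [Hlj HljL].
    rewrite <- (Hc j 1%nat Hj ltac:(simpl; tauto)).
    apply (edge_rep lam1 (l j)); auto.
    - apply He. apply edges_in; auto.
    - intros t Ht. apply HSp. lra. }
  assert (REP0 : G = Gamma2 -> exists Rf, 0 < Rf 0 /\ (forall x, 0 <= x <= l 0%nat -> 0 < Rf x) /\
     forall phi, is_eigenfunction G l gA lam1 phi -> forall x, 0 <= x <= l 0%nat ->
       phi 0%nat x = phi 1%nat (l 1%nat) * Rf x / Rf 0).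
  { intros HG. subst G.
    assert (H0 : 0 < l 0%nat) by (apply Hl; simpl; tauto).
    assert (HR : lam1 <= 0 \/ sqrt lam1 * l 0%nat < PI/2).
    { destruct Hb1 as [h|[_ hb]]; [left; auto|right; auto]. }
    destruct (R_exists lam1 (l 0%nat) H0 HR) as [Rf [HR1 [HR2 HR3]]].
    exists Rf. split; [apply HR3; lra|]. split; auto.
    intros phi [He [HD [Hc [[Hc0 [HK HC]] _]]]] x Hx.
    rewrite <- Hc0.
    apply (edge0_rep lam1 (l 0%nat)); auto.
    - apply He. simpl; tauto.
    - lra. }
  assert (NZ : forall phi, is_eigenfunction G l gA lam1 phi -> phi 1%nat (l 1%nat) <> 0).
  { intros phi Hphi Hv. destruct Hphi as [A [B [C [D [j [x [Hj [Hx Hne]]]]]]]].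
    apply Hne.
    destruct (edges_cases G j Hj) as [Hj'|[HG Hj0]].
    - rewrite (REP phi (conj A (conj B (conj C (conj D (ex_intro _ j (ex_intro _ x (conj Hj (conj Hx Hne)))))))) j x Hj' Hx).
      rewrite Hv. field. destruct (HLj j Hj'). assert (0 < S (l j)) by (apply HSp; lra). lra.
    - subst j. destruct (REP0 HG) as [Rf [HR0 [HRp HRe]]].
      rewrite (HRe phi (conj A (conj B (conj C (conj D (ex_intro _ 0%nat (ex_intro _ x (conj Hj (conj Hx Hne)))))))) x Hx).
      rewrite Hv. field. lra. }
  split.
  - intros phi psi Hphi Hpsi.
    assert (Hv := NZ phi Hphi).
    exists (psi 1%nat (l 1%nat) / phi 1%nat (l 1%nat)).
    intros j x Hj Hx.
    destruct (edges_cases G j Hj) as [Hj'|[HG Hj0]].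
    + rewrite (REP phi Hphi j x Hj' Hx), (REP psi Hpsi j x Hj' Hx).
      destruct (HLj j Hj'). assert (0 < S (l j)) by (apply HSp; lra). field. lra.
    + subst j. destruct (REP0 HG) as [Rf [HR0 [HRp HRe]]].
      rewrite (HRe phi Hphi x Hx), (HRe psi Hpsi x Hx). field. lra.
  - intros E12 E23 E34 phi Hphi.
    assert (Hv := NZ phi Hphi).
    assert (El : forall j, In j [1;2;3;4]%nat -> l j = l 1%nat).
    { apply in4; congruence. }
    split.
    + intros j k x Hj Hk Hx.
      assert (Ej := El j Hj). assert (Ek := El k Hk).
      rewrite (REP phi Hphi j x Hj) by lra. rewrite (REP phi Hphi k x Hk) by lra.
      rewrite Ej, Ek. reflexivity.
    + intros j x Hj Hx Hjx.
      destruct (edges_cases G j Hj) as [Hj'|[HG Hj0]].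
      * assert (Hx0 : 0 < x). { destruct Hjx; auto. subst j. simpl in Hj'. intuition discriminate. }
        rewrite (REP phi Hphi j x Hj' Hx).
        destruct (HLj j Hj'). assert (0 < S (l j)) by (apply HSp; lra).
        assert (0 < S x) by (apply HSp; lra).
        intros Hc. apply Hv.
        replace (phi 1%nat (l 1%nat)) with (phi 1%nat (l 1%nat) * S x / S (l j) * (S (l j) / S x)) by (field; lra).
        rewrite Hc. ring.
      * subst j. destruct (REP0 HG) as [Rf [HR0 [HRp HRe]]].
        rewrite (HRe phi Hphi x Hx).
        assert (0 < Rf x) by (apply HRp; lra).
        intros Hc. apply Hv.
        replace (phi 1%nat (l 1%nat)) with (phi 1%nat (l 1%nat) * Rf x / Rf 0 * (Rf 0 / Rf x)) by (field; lra).
        rewrite Hc. ring.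
Qed.
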